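(* Suppose that $Q_ph(x)=M_p(g_{p+1}h)(x)$ for Markov kernels $M_p$ and nonnegative measurable potentials $g_{p+1}$, and that (MG) holds: (i) there are constants $0<\sigma_-<\sigma_+<\infty$ and $\varphi\in\mathcal P(\mathcal X)$ with $\sigma_-\varphi(A)\le M_p(x,A)\le\sigma_+\varphi(A)$ for all $p\ge0$, $x\in\mathsf X$, $A\in\mathcal X$; (ii) $w_+:=\sup_p\|w_p\|_\infty<\infty$; (iii) $c_-:=\inf_{p,x}Q_p\mathbf 1(x)>0$. Let $\rho=1-\sigma_-/\sigma_+$ and, for $n\ge1$ and $h\in\mathrm B(\mathcal X)$, $$\sigma_n^2(h)=\sum_{\ell=0}^{n-1}(n-\ell)\frac{\eta_\ell R_\ell\{w_\ell^2\,[Q_{\ell+1}\cdots Q_{n-1}(h-\eta_nh)]^2\}}{(\eta_\ell Q_\ell\cdots Q_{n-1}\mathbf 1)^2}$$ (the asymptotic variance of the double bootstrap algorithm). Then for all $n\ge1$ and $h\in\mathrm B(\mathcal X)$, $$\sigma_n^2(h)\le w_+\frac{\mathrm{osc}(h)^2}{(1-\rho)^2(1-\rho^2)^2c_-}.$$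
   Context: $(\mathsf X,\mathcal X)$ a measurable space; $\mathrm B(\mathcal X)$ bounded real measurable functions, $\mathcal P(\mathcal X)$ probability measures, $\nu h=\int h\,d\nu$, $\|h\|_\infty=\sup|h|$, $\mathrm{osc}(h)=\sup_{x,x'}|h(x)-h(x')|$, $\mathbf 1$ the constant one. Feynman–Kac flow: $\eta_0\in\mathcal P(\mathcal X)$, $\eta_{p+1}h=\eta_pQ_ph/\eta_pQ_p\mathbf 1$ with $Q_p\mathbf 1$ bounded. $R_p$ are Markov kernels on $\mathsf X$ with $Q_p(x,\cdot)\ll R_p(x,\cdot)$ and $w_p(x,x')=\frac{dQ_p(x,\cdot)}{dR_p(x,\cdot)}(x')$ nonnegative bounded measurable; $R_p(w_p^2f)(x)=\int w_p^2(x,x')f(x')R_p(x,dx')$. Convention: $Q_{\ell+1}\cdots Q_{n-1}=\mathrm{id}$ if $\ell+1>n-1$; kernel products $(KL)(x,A)=\int K(x,dy)L(y,A)$. *)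

(* Defs.v *)
From HB Require Import structures.
From mathcomp Require Import all_boot all_order all_algebra.
From mathcomp Require Import all_classical all_reals all_analysis.
Set Implicit Arguments. Unset Strict Implicit. Unset Printing Implicit Defensive.
Import Order.TTheory GRing.Theory Num.Theory.
Local Open Scope classical_set_scope.
Local Open Scope ring_scope.

Section FK.
Context (d : measure_display) (T : measurableType d) (R : realType).

Definition Qop (M : nat -> R.-pker T ~> T) (g : nat -> T -> R) (p : nat)
  (f : T -> R) : T -> R :=
  fun x => Rintegral (M p x) setT (fun y => g p.+1 y * f y).

(* Qcomp M g l k f = Q_l Q_{l+1} ... Q_{l+k-1} f  (identity when k = 0) *)
Fixpoint Qcomp (M : nat -> R.-pker T ~> T) (g : nat -> T -> R) (l k : nat)
  (f : T -> R) : T -> R :=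
  match k with
  | 0%N => f
  | k'.+1 => Qop M g l (Qcomp M g l.+1 k' f)
  end.

Definition mint (nu : probability T R) (h : T -> R) : R := Rintegral nu setT h.

Definition osc (h : T -> R) : R :=
  sup (range (fun xy : T * T => `|h xy.1 - h xy.2|)).

Definition bounded_measurable (h : T -> R) : Prop :=
  measurable_fun setT h /\ exists C : R, forall x, `|h x| <= C.

Definition sigma2 (M : nat -> R.-pker T ~> T) (g : nat -> T -> R)
  (Rk : nat -> R.-pker T ~> T) (w : nat -> T * T -> R)
  (eta : nat -> probability T R) (n : nat) (h : T -> R) : R :=
  \sum_(0 <= l < n)
    (n - l)%:R *
    (mint (eta l) (fun x => Rintegral (Rk l x) setT
        (fun y => (w l (x, y)) ^+ 2 *
           (Qcomp M g l.+1 (n - l.+1) (fun z => h z - mint (eta n) h) y) ^+ 2))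
     / (mint (eta l) (Qcomp M g l (n - l) (fun=> 1))) ^+ 2).

End FK.

(* Main.v *)
Require Import Defs.
From HB Require Import structures.
From mathcomp Require Import all_boot all_order all_algebra.
From mathcomp Require Import all_classical all_reals all_analysis.
From mathcomp Require Import ring lra zify.
Import Order.TTheory GRing.Theory Num.Theory.
Import measurable_realfun.
Local Open Scope classical_set_scope.
Local Open Scope ring_scope.

Set Implicit Arguments. Unset Strict Implicit. Unset Printing Implicit Defensive.

Section Gen.
Context (d : measure_display) (T : measurableType d) (R : realType).
Notation bm := (@bounded_measurable d T R).

Lemma bm_cst (c : R) : bm (fun=> c).
Proof. by split; [exact: measurable_cst | exists `|c|]. Qed.

Lemma bm_add (f h : T -> R) : bm f -> bm h -> bm (fun x => f x + h x).
Proof.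
move=> [mf [C1 hC1]] [mh [C2 hC2]]; split.
  exact: (measurable_realfun.measurable_funD mf mh).
by exists (C1 + C2) => x; rewrite (le_trans (ler_normD _ _))// lerD.
Qed.

Lemma bm_mul (f h : T -> R) : bm f -> bm h -> bm (fun x => f x * h x).
Proof.
move=> [mf [C1 hC1]] [mh [C2 hC2]]; split.
  exact: (measurable_realfun.measurable_funM mf mh).
exists (C1 * C2) => x; rewrite normrM ler_pM//.
Qed.

Lemma bm_scale (a : R) (f : T -> R) : bm f -> bm (fun x => a * f x).
Proof. by move=> hf; exact: (bm_mul (bm_cst a) hf). Qed.

Lemma bm_sub (f h : T -> R) : bm f -> bm h -> bm (fun x => f x - h x).
Proof.
move=> hf hh; have := bm_add hf (bm_scale (-1) hh).
by rewrite (_ : (fun x => _) = (fun x => f x - h x))//; apply/funext => x; rewrite mulN1r.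
Qed.

Lemma bm_indic (A : set T) : measurable A -> bm (\1_A : T -> R).
Proof.
move=> mA; split; first exact: measurable_realfun.measurable_indic.
by exists 1 => x; rewrite indicE; case: (x \in A); rewrite ?normr1 ?normr0.
Qed.

Definition linfun (L : (T -> R) -> R) :=
  [/\ forall f h, bm f -> bm h -> L (fun x => f x + h x) = L f + L h,
      forall a f, bm f -> L (fun x => a * f x) = a * L f &
      forall f h, bm f -> bm h -> (forall x, f x <= h x) -> L f <= L h].


Lemma linfun0 L : linfun L -> L (fun=> 0) = 0.
Proof.
case=> _ hs _; have := hs 0 (fun=> 0) (bm_cst 0).
transitivity (L (fun=> 0 * 0)); first by congr L; apply/funext => x; rewrite mulr0.
by rewrite H mul0r.
Qed.

Lemma linfun_sub L f h : linfun L -> bm f -> bm h ->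
  L (fun x => f x - h x) = L f - L h.
Proof.
move=> hL hf hh; have [ha hs _] := hL.
rewrite (_ : (fun x => f x - h x) = (fun x => f x + (-1) * h x)); last first.
  by apply/funext => x; rewrite mulN1r.
by rewrite ha ?hs ?mulN1r//; exact: bm_scale.
Qed.

Lemma linfun_cst L c : linfun L -> L (fun=> c) = c * L (fun=> 1).
Proof.
case=> _ hs _; rewrite -hs; last exact: bm_cst.
by congr L; apply/funext => x; rewrite mulr1.
Qed.

Lemma linfun_ge0 L f : linfun L -> bm f -> (forall x, 0 <= f x) -> 0 <= L f.
Proof.
move=> hL hf f0; rewrite -(linfun0 hL); have [_ _ hm] := hL.
by apply: hm => //; exact: bm_cst.
Qed.

Lemma func_le L1 L2 : linfun L1 -> linfun L2 ->
  (forall A, measurable A -> L1 (\1_A) <= L2 (\1_A)) ->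
  forall f, bm f -> (forall x, 0 <= f x) -> L1 f <= L2 f.
Proof.
move=> hL1 hL2 hA f hf f0.
have [ha1 hs1 hm1] := hL1; have [ha2 hs2 hm2] := hL2.
have [mf [C hC]] := hf.
have L10 : 0 <= L1 (fun=> 1).
  by apply: linfun_ge0 => //; exact: bm_cst.
suff H : forall m : nat, L1 f <= L2 f + L1 (fun=> 1) / m.+1%:R.
  apply/ler_addgt0Pr => e e0.
  apply: le_trans (H (Num.truncn (L1 (fun=> 1) / e))) _.
  rewrite lerD2l ler_pdivrMr// -ler_pdivrMl//.
  by rewrite mulrC ltW// truncnS_gt.
move=> m; set k : R := m.+1%:R.
have k0 : 0 < k by rewrite /k ltr0n.
pose A (j : nat) := [set x | Num.truncn (k * f x) = j].
have mkf : measurable_fun setT (fun x => k * f x).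
  exact: (measurable_realfun.measurable_funM (measurable_cst k) mf).
have mA j : measurable (A j).
  have := mkf measurableT _ (measurable_itv `[j%:R, j.+1%:R[).
  rewrite setTI; congr measurable; apply/seteqP; split => x /=.
    rewrite in_itv/= => /andP[h1 h2].
    by apply/eqP; rewrite truncn_eq ?h1 ?h2// mulr_ge0// ltW.
  move=> <-; rewrite in_itv/=; apply/andP; split.
    by rewrite truncn_le mulr_ge0// ltW.
  exact: truncnS_gt.
pose S n := fun x => \sum_(0 <= j < n) (j%:R / k) * \1_(A j) x.
have HS n : bm (S n) /\ L1 (S n) <= L2 (S n).
  elim: n => [|n [IHb IHl]].
    rewrite /S (_ : (fun x => _) = fun=> 0); last first.
      by apply/funext => x; rewrite big_geq.
    by split; [exact: bm_cst|rewrite !linfun0].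
  have eS : S n.+1 = (fun x => S n x + (n%:R / k) * \1_(A n) x).
    by apply/funext => x; rewrite /S big_nat_recr.
  have bmi : bm (\1_(A n) : T -> R) by exact: bm_indic.
  rewrite eS; split; first by apply: bm_add => //; exact: bm_scale.
  rewrite ha1 ?ha2 ?hs1 ?hs2//; try exact: bm_scale.
  by apply: lerD => //; apply: ler_wpM2l => //; [rewrite divr_ge0|exact: hA].
pose K := (Num.truncn (k * C)).+1.
have Sx x : S K x = (Num.truncn (k * f x))%:R / k.
  have tK : (Num.truncn (k * f x) < K)%N.
    rewrite ltnS; apply: le_truncn; rewrite ler_pM2l//.
    exact: le_trans (ler_norm _) (hC x).
  suff: forall n, S n x = if (Num.truncn (k * f x) < n)%N then (Num.truncn (k * f x))%:R / k else 0.
    by move=> ->; rewrite tK.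
  elim => [|n IH]; first by rewrite /S big_geq.
  rewrite /S big_nat_recr//= -/(S n x) IH indicE.
  have -> : (x \in A n) = (Num.truncn (k * f x) == n).
    by apply/idP/eqP; [rewrite inE|move=> h; rewrite inE].
  set t := Num.truncn (k * f x).
  have [tn|tn] := eqVneq t n.
    by rewrite tn ltnn ltnSn /= mulr1 add0r.
  by rewrite ltnS [in RHS]leq_eqVlt (negbTE tn) /= mulr0 addr0.
have fS x : S K x <= f x /\ f x <= S K x + 1 / k.
  rewrite Sx; have := truncn_itv (mulr_ge0 (ltW k0) (f0 x)) => /andP[h1 h2].
  split; first by rewrite ler_pdivrMr// [f x * _]mulrC.
  rewrite -mulrDl ler_pdivlMr// mulrC; apply: ltW.
  by rewrite (_ : _ + 1 = (Num.truncn (k * f x)).+1%:R)// -addn1 natrD.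
have [bS lS] := HS K.
have bS1 : bm (fun x => S K x + 1 / k * 1).
  by apply: bm_add => //; exact: bm_cst.
apply: (le_trans (hm1 f _ hf bS1 _)); first by move=> x; rewrite mulr1; case: (fS x).
rewrite ha1 //; last exact: bm_cst.
rewrite hs1; last exact: bm_cst. rewrite div1r [_^-1 * _]mulrC.
rewrite lerD2r; apply: le_trans lS _; apply: hm2 => // x; by case: (fS x).
Qed.

End Gen.

Section Int.
Context (d : measure_display) (T : measurableType d) (R : realType).
Notation bm := (@bounded_measurable d T R).
Variables (mu : {measure set T -> \bar R}) (G : T -> R).
Hypotheses (G0 : forall y, 0 <= G y) (mG : measurable_fun setT G)
  (iG : (\int[mu]_y (G y)%:E < +oo)%E).

Lemma integrableG : mu.-integrable setT (EFin \o G).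
Proof.
apply/integrableP; split; first exact/measurable_EFinP.
rewrite (eq_integral (fun y => (G y)%:E))//.
  by move=> y _ /=; rewrite ger0_norm.
Qed.

Lemma intGf f : bm f -> mu.-integrable setT (EFin \o (fun y => G y * f y)).
Proof.
move=> [mf [C hC]].
apply: (@le_integrable _ _ _ mu setT measurableT _ (fun y => (`|C| * G y)%:E)).
- apply/measurable_EFinP; exact: (measurable_realfun.measurable_funM mG mf).
- move=> y _ /=; rewrite lee_fin normrM (ger0_norm (G0 y)).
  rewrite (ger0_norm (mulr_ge0 (normr_ge0 C) (G0 y))) [_ * G y]mulrC ler_wpM2l//.
  exact: le_trans (hC y) (ler_norm _).
- under eq_fun do rewrite EFinM.
  exact: integrableZl integrableG.
Qed.

Lemma linfun_int : linfun (fun f => Rintegral mu setT (fun y => G y * f y)).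
Proof.
split.
- move=> f h hf hh; rewrite -RintegralD//; try exact: intGf.
  by apply: eq_Rintegral => y _; rewrite mulrDr.
- move=> a f hf; rewrite -RintegralZl//; last exact: intGf.
  by apply: eq_Rintegral => y _; rewrite mulrCA.
- move=> f h hf hh fh; apply: le_Rintegral => //; try exact: intGf.
  by move=> y _; rewrite ler_wpM2l.
Qed.

End Int.

Section Gen2.
Context (d : measure_display) (T : measurableType d) (R : realType).
Notation bm := (@bounded_measurable d T R).

Lemma linfun_norm L f C : linfun L -> bm f -> (forall x, `|f x| <= C) ->
  `|L f| <= C * L (fun=> 1).
Proof.
move=> hL hf hC; have [_ _ hm] := hL.
rewrite ler_norml; apply/andP; split.
- rewrite -mulNr -linfun_cst//; apply: hm => //; first exact: bm_cst.
  by move=> x; have := hC x; rewrite ler_norml => /andP[].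
- rewrite -linfun_cst//; apply: hm => //; first exact: bm_cst.
  by move=> x; have := hC x; rewrite ler_norml => /andP[].
Qed.

Import HBNNSimple.

Lemma le_measure_integral (m1 m2 : {measure set T -> \bar R}) (f : T -> \bar R) :
  (forall A, measurable A -> (m1 A <= m2 A)%E) -> (forall x, (0 <= f x)%E) ->
  (\int[m1]_x f x <= \int[m2]_x f x)%E.
Proof.
move=> m12 f0; rewrite !ge0_integralE//.
apply: ge_ereal_sup => _ [h hf <-].
have H1 : (sintegral m1 h <= sintegral m2 h)%E.
  rewrite !sintegralE; apply: lee_fsum; first exact: fimfunP.
  move=> r [x _ <-]; apply: lee_wpmul2l; first by rewrite lee_fin.
  exact: m12.
apply: (le_trans H1); apply: ereal_sup_ubound; by exists h.
Qed.


Lemma linfun_comp (Op : (T -> R) -> T -> R) (L : (T -> R) -> R) :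
  (forall x, linfun (fun f => Op f x)) -> (forall f, bm f -> bm (Op f)) ->
  linfun L -> linfun (fun f => L (Op f)).
Proof.
move=> hO bO [ha hs hm]; split.
- move=> f h hf hh; rewrite -ha; try exact: bO.
  by congr L; apply/funext => x; have [ha' _ _] := hO x; rewrite ha'.
- move=> a f hf; rewrite -hs; last exact: bO.
  by congr L; apply/funext => x; have [_ hs' _] := hO x; rewrite hs'.
- move=> f h hf hh fh; apply: hm; try exact: bO.
  by move=> x; have [_ _ hm'] := hO x; apply: hm'.
Qed.

Lemma linfun_scale (L : (T -> R) -> R) c : 0 <= c -> linfun L -> linfun (fun f => L f * c).
Proof.
move=> c0 [ha hs hm]; split.
- by move=> f h hf hh; rewrite ha// mulrDl.
- by move=> a f hf; rewrite hs// mulrA.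
- by move=> f h hf hh fh; rewrite ler_wpM2r// hm.
Qed.

Lemma func_eq (L1 L2 : (T -> R) -> R) : linfun L1 -> linfun L2 ->
  (forall A, measurable A -> L1 (\1_A) = L2 (\1_A)) ->
  forall f, bm f -> L1 f = L2 f.
Proof.
move=> hL1 hL2 hA f hf.
have [mf [C hC]] := hf.
have hle (L L' : (T -> R) -> R) : linfun L -> linfun L' ->
    (forall A, measurable A -> L (\1_A) = L' (\1_A)) ->
    forall f, bm f -> (forall x, 0 <= f x) -> L f <= L' f.
  by move=> h1 h2 hA' f' hf' f0; apply: func_le => // A mA; rewrite hA'.
have e1 : L1 (fun=> 1) = L2 (fun=> 1).
  have -> : (fun=> 1) = (\1_setT : T -> R).
    by apply/funext => x; rewrite indicE in_setT.
  exact: hA.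
have bfc : bm (fun x => f x + `|C|) by apply: bm_add => //; exact: bm_cst.
have fc0 x : 0 <= f x + `|C|.
  by rewrite -lerBlDr sub0r; have := hC x; rewrite ler_norml => /andP[+ _];
    apply: le_trans; rewrite lerN2 ler_norm.
have : L1 (fun x => f x + `|C|) = L2 (fun x => f x + `|C|).
  apply/le_anti/andP; split; first exact: (hle _ _ hL1 hL2 hA _ bfc fc0).
  exact: (hle _ _ hL2 hL1 (fun A mA => esym (hA A mA)) _ bfc fc0).
have [ha1 _ _] := hL1; have [ha2 _ _] := hL2.
rewrite ha1 ?ha2 //; try exact: bm_cst.
by rewrite (linfun_cst _ hL1) (linfun_cst _ hL2) e1 => /addIr.
Qed.

Lemma RintE (mu : {measure set T -> \bar R}) (h : T -> R) :
  mu.-integrable setT (EFin \o h) ->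
  (Rintegral mu setT h)%:E = (\int[mu]_y (h y)%:E)%E.
Proof. by move=> ih; rewrite /Rintegral fineK//; exact: integrable_fin_num. Qed.

Lemma int_indic (mu : {measure set T -> \bar R}) (G : T -> R) A :
  measurable A ->
  (\int[mu]_y (G y * \1_A y)%:E = \int[mu]_(y in A) (G y)%:E)%E.
Proof.
move=> mA; rewrite [RHS]integral_mkcond; apply: eq_integral => y _.
by rewrite patchE indicE; case: (y \in A); rewrite ?mulr1 ?mulr0.
Qed.

End Gen2.

Section Geom.
Context (R : realType).

Lemma geom_sum (q : R) n : 0 <= q -> q < 1 ->
  \sum_(0 <= j < n) (j.+1)%:R * q ^+ j <= 1 / (1 - q) ^+ 2.
Proof.
move=> q0 q1.
have id m : (1 - q) ^+ 2 * \sum_(0 <= j < m) (j.+1)%:R * q ^+ j =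
    1 - (m.+1)%:R * q ^+ m + m%:R * q ^+ m.+1.
  elim: m => [|m IH]; first by rewrite big_geq// mulr0 expr0 mulr1 mul0r addr0 subrr.
  rewrite big_nat_recr//= mulrDr IH.
  rewrite !exprS -[(m.+2)%:R]natr1 -[(m.+1)%:R]natr1.
  ring.
have q1' : 0 < 1 - q by rewrite subr_gt0.
rewrite -(ler_pM2l (exprn_gt0 2 q1')) id mul1r mulfV ?gt_eqF ?exprn_gt0//.
rewrite -addrA gerDl addrC subr_le0.
apply: (@le_trans _ _ (n%:R * q ^+ n)); last first.
  by apply: ler_wpM2r; [exact: exprn_ge0|rewrite ler_nat].
apply: ler_wpM2l => //; rewrite exprSr; apply: ler_piMr; [exact: exprn_ge0|exact: ltW].
Qed.


End Geom.

Section Main.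
Context (d : measure_display) (T : measurableType d) (R : realType)
  (M : nat -> R.-pker T ~> T) (g : nat -> T -> R)
  (Rk : nat -> R.-pker T ~> T) (w : nat -> T * T -> R)
  (eta : nat -> probability T R)
  (phi : probability T R) (sigm sigp wplus cminus : R).
Notation bm := (@bounded_measurable d T R).
Hypotheses (mg : forall p, measurable_fun setT (g p))
  (g0 : forall p x, 0 <= g p x)
  (gC : forall p, exists C : R, forall x,
      (\int[M p x]_y (g p.+1 y)%:E <= C%:E)%E)
  (mw : forall p, measurable_fun setT (w p))
  (w0 : forall p xy, 0 <= w p xy)
  (wC : forall p, exists C : R, forall xy, w p xy <= C)
  (dens : forall p x A, measurable A ->
      (\int[M p x]_(y in A) (g p.+1 y)%:E = \int[Rk p x]_(y in A) (w p (x, y))%:E)%E)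
  (flow : forall p A, measurable A ->
      eta p.+1 A = (mint (eta p) (Qop M g p (\1_A)) / mint (eta p) (Qop M g p (fun=> 1)))%:E)
  (sm0 : 0 < sigm) (smp : sigm < sigp)
  (mix : forall p x A, measurable A ->
      ((sigm%:E * phi A <= M p x A) /\ (M p x A <= sigp%:E * phi A))%E)
  (wp : forall p xy, w p xy <= wplus)
  (cm0 : 0 < cminus)
  (cm : forall p x, cminus <= Qop M g p (fun=> 1) x).

Let Q := Qop M g.
Let E p := mint (eta p).

Lemma fine_le_C (e : \bar R) C : (0 <= e)%E -> (e <= C%:E)%E -> fine e <= C.
Proof. by case: e => [r| |]//= _; rewrite lee_fin. Qed.

Lemma iQ p x : (\int[M p x]_y (g p.+1 y)%:E < +oo)%E.
Proof. by have [C hC] := gC p; exact: (le_lt_trans (hC x) (ltry _)). Qed.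

Lemma LQ p x : linfun (fun f => Q p f x).
Proof. exact: (linfun_int (g0 p.+1) (mg p.+1) (iQ p x)). Qed.

Lemma Q1C p : exists C, forall x, Q p (fun=> 1) x <= C.
Proof.
have [C hC] := gC p; exists C => x.
rewrite /Q /Qop /Rintegral; under eq_integral do rewrite mulr1.
by apply: fine_le_C => //; apply: integral_ge0 => y _; rewrite lee_fin.
Qed.

Lemma Q_ge0 p f x : bm f -> (forall y, 0 <= f y) -> 0 <= Q p f x.
Proof. by move=> hf f0; apply: linfun_ge0 (LQ p x) hf f0. Qed.

Lemma mQ_ge0 p f : bm f -> (forall y, 0 <= f y) -> measurable_fun setT (Q p f).
Proof.
move=> [mf _] f0.
have mk : measurable_fun setT (fun y => (g p.+1 y * f y)%:E).
  exact/measurable_EFinP/(measurable_funM (mg p.+1) mf).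
have k0 y : (0 <= (g p.+1 y * f y)%:E)%E by rewrite lee_fin mulr_ge0.
have := @measurable_fun_integral_kernel _ _ _ _ _ (M p)
  (fun U mU => measurable_kernel (M p) U mU) _ k0 mk.
move=> /(measurableT_comp (fine_measurable measurableT)).
by [].
Qed.

Lemma bmQ p f : bm f -> bm (Q p f).
Proof.
move=> hf; have [mf [C hC]] := hf.
have [C1 hC1] := Q1C p.
split; last first.
  exists (`|C| * C1) => x.
  apply: (le_trans (linfun_norm (LQ p x) hf (C:=`|C|) _)).
    by move=> y; exact: le_trans (hC y) (ler_norm _).
  by rewrite ler_wpM2l.
have bfc : bm (fun y => f y + `|C|) by apply: bm_add => //; exact: bm_cst.
have fc0 y : 0 <= f y + `|C|.
  by rewrite -lerBlDr sub0r; have := hC y; rewrite ler_norml => /andP[+ _];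
    apply: le_trans; rewrite lerN2 ler_norm.
have -> : Q p f = fun x => Q p (fun y => f y + `|C|) x - `|C| * Q p (fun=> 1) x.
  apply/funext => x; have [ha _ _] := LQ p x.
  by rewrite ha; [rewrite (linfun_cst _ (LQ p x)) addrK|done|exact: bm_cst].
apply: measurable_funB; first exact: mQ_ge0.
apply: measurable_funM; first exact: measurable_cst.
by apply: mQ_ge0 => //; exact: bm_cst.
Qed.


Lemma LE p : linfun (E p).
Proof.
have i1 : (\int[eta p]_y (1:R)%:E < +oo)%E.
  by rewrite integral_cst//= mul1e probability_setT ltry.
have h := @linfun_int _ _ _ (eta p) (fun=> 1) (fun=> ler01) (measurable_cst _) i1.
have -> : E p = (fun f => Rintegral (eta p) setT (fun y => 1 * f y)).
  by apply/funext => f; rewrite /E /mint; apply: eq_Rintegral => y _; rewrite mul1r.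
exact: h.
Qed.

Lemma E1 p : E p (fun=> 1) = 1.
Proof.
rewrite /E /mint Rintegral_cst// (_ : fine _ = 1) ?mul1r//.
exact: (congr1 fine (probability_setT (eta p))).
Qed.

Lemma Ecst p c : E p (fun=> c) = c.
Proof. by rewrite (linfun_cst _ (LE p)) E1 mulr1. Qed.

Lemma inh : exists x : T, True.
Proof.
case: (pselect (exists x : T, True)) => // /forallNP h.
have hT : [set: T] = set0.
  by rewrite -subset0 => x _; apply: (h x).
have := probability_setT phi; rewrite hT measure0.
by move/(congr1 fine) => /= /esym/eqP; rewrite oner_eq0.
Qed.

Definition Phi p f := Rintegral phi setT (fun y => g p.+1 y * f y).

Lemma iPhi p : (\int[phi]_y (g p.+1 y)%:E < +oo)%E.
Proof.
have [x0 _] := inh; have [C hC] := gC p.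
have k0 : 0 <= sigm by exact: ltW.
have mgE : measurable_fun setT (fun y => (g p.+1 y)%:E).
  exact/measurable_EFinP.
have : (sigm%:E * \int[phi]_y (g p.+1 y)%:E <= C%:E)%E.
  apply: le_trans (hC x0).
  have -> : (sigm%:E * \int[phi]_y (g p.+1 y)%:E =
     \int[mscale (NngNum k0) phi]_y (g p.+1 y)%:E)%E.
    by rewrite ge0_integral_mscale//= => y _; rewrite lee_fin.
  apply: le_measure_integral; last by move=> y; rewrite lee_fin.
  by move=> A mA /=; have [] := mix p x0 mA.
have : (0 <= \int[phi]_y (g p.+1 y)%:E)%E.
  by apply: integral_ge0 => y _; rewrite lee_fin.
case: (\int[phi]_y (g p.+1 y)%:E)%E => [r| |]//= _.
  by move=> _; exact: ltry.
by rewrite mulry gtr0_sg// mul1e leye_eq.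
Qed.

Lemma LPhi p : linfun (Phi p).
Proof. exact: (linfun_int (g0 p.+1) (mg p.+1) (iPhi p)). Qed.

Lemma mixQ p f x : bm f -> (forall y, 0 <= f y) ->
  sigm * Phi p f <= Q p f x /\ Q p f x <= sigp * Phi p f.
Proof.
move=> hf f0.
have iM := intGf (g0 p.+1) (mg p.+1) (iQ p x) hf.
have iP := intGf (g0 p.+1) (mg p.+1) (iPhi p) hf.
have mk : measurable_fun setT (fun y => (g p.+1 y * f y)%:E).
  by apply/measurable_EFinP/measurable_funM => //; case: hf.
have k0 y : (0 <= (g p.+1 y * f y)%:E)%E by rewrite lee_fin mulr_ge0.
have s0 : 0 <= sigm by exact: ltW.
have s1 : 0 <= sigp by exact: ltW (lt_trans sm0 smp).
rewrite /Q /Qop /Phi -!lee_fin !EFinM !RintE//; split.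
- have -> : (sigm%:E * \int[phi]_y (g p.+1 y * f y)%:E =
     \int[mscale (NngNum s0) phi]_y (g p.+1 y * f y)%:E)%E.
    by rewrite ge0_integral_mscale.
  apply: le_measure_integral => // A mA /=; by have [] := mix p x mA.
- have -> : (sigp%:E * \int[phi]_y (g p.+1 y * f y)%:E =
     \int[mscale (NngNum s1) phi]_y (g p.+1 y * f y)%:E)%E.
    by rewrite ge0_integral_mscale.
  apply: le_measure_integral => // A mA /=; by have [] := mix p x mA.
Qed.

Lemma EQ1_ge p : cminus <= E p (Q p (fun=> 1)).
Proof.
rewrite -{1}(Ecst p cminus); have [_ _ hm] := LE p.
apply: hm; [exact: bm_cst|apply: bmQ; exact: bm_cst|exact: cm].
Qed.

Lemma flowE p f : bm f -> E p.+1 f * E p (Q p (fun=> 1)) = E p (Q p f).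
Proof.
have Z0 : 0 < E p (Q p (fun=> 1)) by exact: lt_le_trans cm0 (EQ1_ge p).
apply: (func_eq (linfun_scale (ltW Z0) (LE p.+1)) (linfun_comp (@LQ p) (@bmQ p) (LE p))).
move=> A mA; have fl := flow p mA.
rewrite [X in X * _ = _](_ : _ = fine (eta p.+1 A)); last first.
  by rewrite /E /mint /Rintegral integral_indic// setIT.
rewrite (congr1 fine fl) /=.
by rewrite divfK// gt_eqF.
Qed.

Lemma densE p x F : bm F ->
  Rintegral (Rk p x) setT (fun y => w p (x, y) * F y) = Q p F x.
Proof.
have mwx : measurable_fun setT (fun y => w p (x, y)).
  exact: (measurableT_comp (mw p) (pair1_measurable x)).
have [C hC] := wC p.
have iw : (\int[Rk p x]_y (w p (x, y))%:E < +oo)%E.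
  apply: (@le_lt_trans _ _ (\int[Rk p x]_y (cst C%:E) y)%E).
    apply: ge0_le_integral => //.
    - by move=> y _; rewrite lee_fin.
    - exact/measurable_EFinP.
    - by move=> y _; rewrite lee_fin.
  by rewrite integral_cst//= prob_kernel mule1 ltry.
move=> hF.
apply: (@func_eq _ _ _ (fun f => Rintegral (Rk p x) setT (fun y => w p (x, y) * f y))
  (fun f => Q p f x) (linfun_int (fun y => w0 p (x, y)) mwx iw) (LQ p x) _ F hF).
move=> A mA; rewrite /Q /Qop /Rintegral; congr fine.
by rewrite !int_indic// dens.
Qed.


Lemma bmQc l k f : bm f -> bm (Qcomp M g l k f).
Proof. by elim: k l => [|k IH] l hf //=; apply: bmQ; exact: IH. Qed.

Lemma linfun_ev x : linfun (fun f : T -> R => f x).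
Proof. by split. Qed.

Lemma LQc l k x : linfun (fun f => Qcomp M g l k f x).
Proof.
elim: k l x => [|k IH] l x; first exact: linfun_ev.
exact: (@linfun_comp _ _ _ (Qcomp M g l.+1 k) (fun h => Q l h x)
  (IH l.+1) (fun f hf => bmQc l.+1 k hf) (LQ l x)).
Qed.

Lemma Qc1_ge l k x : cminus ^+ k <= Qcomp M g l k (fun=> 1) x.
Proof.
elim: k l x => [|k IH] l x /=; first by rewrite expr0.
have [_ _ hm] := LQ l x.
apply: (@le_trans _ _ (Q l (fun=> cminus ^+ k) x)).
  rewrite (linfun_cst _ (LQ l x)) exprSr; apply: ler_wpM2l; [exact: exprn_ge0 (ltW cm0)|exact: cm].
apply: (hm (fun=> cminus ^+ k) (Qcomp M g l.+1 k (fun=> 1))).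
- exact: bm_cst.
- apply: bmQc; exact: bm_cst.
- exact: IH.
Qed.

Lemma Qc1_gt0 l k x : 0 < Qcomp M g l k (fun=> 1) x.
Proof. exact: lt_le_trans (exprn_gt0 _ cm0) (Qc1_ge l k x). Qed.

Lemma flowC l k f : bm f ->
  E l (Qcomp M g l k f) = E (l + k)%N f * E l (Qcomp M g l k (fun=> 1)).
Proof.
elim: k l f => [|k IH] l f hf /=; first by rewrite addn0 E1 mulr1.
have b1 : bm (fun=> (1:R)) by exact: bm_cst.
rewrite -(flowE l (bmQc l.+1 k hf)) -(flowE l (bmQc l.+1 k b1)).
by rewrite IH// addSnnS mulrA.
Qed.

Definition rho := 1 - sigm / sigp.

Lemma onestep p u v a W b : bm u -> bm v -> 0 < b -> (forall y, b <= u y) ->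
  (forall y, a * u y <= v y /\ v y <= (a + W) * u y) ->
  exists a2, forall x, a2 * Q p u x <= Q p v x /\ Q p v x <= (a2 + rho * W) * Q p u x.
Proof.
move=> bu bv b0 bu0 huv.
pose H := fun y => v y - a * u y.
pose J := fun y => (a + W) * u y - v y.
have bH : bm H by apply: bm_sub => //; exact: bm_scale.
have bJ : bm J by apply: bm_sub => //; exact: bm_scale.
have H0 y : 0 <= H y by rewrite subr_ge0; case: (huv y).
have J0 y : 0 <= J y by rewrite subr_ge0; case: (huv y).
have [x0 _] := inh.
have sp0 : 0 < sigp by exact: lt_trans sm0 smp.
have Qu_pos x : 0 < Q p u x.
  apply: (@lt_le_trans _ _ (b * Q p (fun=> 1) x)).
    by rewrite mulr_gt0//; exact: lt_le_trans cm0 (cm p x).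
  rewrite -(linfun_cst _ (LQ p x)); have [_ _ hm] := LQ p x.
  by apply: hm => //; exact: bm_cst.
have u0 y : 0 <= u y by exact: le_trans (ltW b0) (bu0 y).
have Pu_pos : 0 < Phi p u.
  have [_ h] := mixQ p x0 bu u0.
  by rewrite -(pmulr_rgt0 _ sp0); exact: lt_le_trans (Qu_pos x0) h.
pose nu := Phi p H / Phi p u.
have PH0 : 0 <= Phi p H by exact: linfun_ge0 (LPhi p) bH H0.
have PJ0 : 0 <= Phi p J by exact: linfun_ge0 (LPhi p) bJ J0.
have [haP hsP _] := LPhi p.
have vE : v = fun y => a * u y + H y.
  by apply/funext => y; rewrite /H; ring.
have JE : J = fun y => W * u y + (-1) * H y.
  by apply/funext => y; rewrite /J /H; ring.
have PJE : Phi p J = W * Phi p u - Phi p H.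
  by rewrite JE haP ?hsP ?mulN1r//; apply: bm_scale.
have nuW : nu <= W.
  by rewrite /nu ler_pdivrMr// -subr_ge0 -PJE.
have nu0 : 0 <= nu by rewrite /nu divr_ge0// ltW.
exists (a + sigm / sigp * nu) => x.
have [haQ hsQ _] := LQ p x.
have QvE : Q p v x = a * Q p u x + Q p H x.
  by rewrite {1}vE haQ ?hsQ//; exact: bm_scale.
have QJE : Q p J x = (a + W) * Q p u x - Q p v x.
  rewrite /J (linfun_sub (LQ p x)) ?hsQ//; exact: bm_scale.
have [hH _] := mixQ p x bH H0.
have [hJ _] := mixQ p x bJ J0.
have [_ hu] := mixQ p x bu u0.
have e0 : 0 <= sigm / sigp * nu by rewrite mulr_ge0// divr_ge0// ltW.
split.
- rewrite QvE mulrDl lerD2l.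
  apply: le_trans hH.
  apply: (@le_trans _ _ (sigm / sigp * nu * (sigp * Phi p u))).
    by apply: ler_wpM2l.
  have -> : sigm / sigp * nu * (sigp * Phi p u) = sigm * Phi p H.
    by rewrite /nu; field; rewrite !gt_eqF.
  done.
- pose e' := sigm / sigp * (W - nu).
  have e'0 : 0 <= e' by rewrite mulr_ge0// ?divr_ge0 ?subr_ge0// ltW.
  have h : e' * Q p u x <= Q p J x.
    apply: le_trans hJ.
    apply: (@le_trans _ _ (e' * (sigp * Phi p u))); first by apply: ler_wpM2l.
    have -> : e' * (sigp * Phi p u) = sigm * Phi p J.
      by rewrite PJE /e' /nu; field; rewrite !gt_eqF.
    done.
  rewrite QJE lerBrDl in h.
  have -> : (a + sigm / sigp * nu + rho * W) * Q p u x = (a + W) * Q p u x - e' * Q p u x.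
    by rewrite /rho /e'; ring.
  by rewrite lerBrDl addrC.
Qed.

Lemma dob k : forall l f a W, bm f -> (forall y, a <= f y /\ f y <= a + W) ->
  exists a', forall x,
    a' * Qcomp M g l k (fun=> 1) x <= Qcomp M g l k f x /\
    Qcomp M g l k f x <= (a' + rho ^+ k * W) * Qcomp M g l k (fun=> 1) x.
Proof.
elim: k => [|k IH] l f a W hf hfa.
  by exists a => x /=; rewrite !mulr1 expr0 mul1r; exact: hfa x.
have [a' ha'] := IH l.+1 f a W hf hfa.
have b1 : bm (fun=> (1:R)) by exact: bm_cst.
have [a2 h2] := @onestep l (Qcomp M g l.+1 k (fun=> 1)) (Qcomp M g l.+1 k f) a'
  (rho ^+ k * W) (cminus ^+ k) (bmQc _ _ b1) (bmQc _ _ hf) (exprn_gt0 _ cm0)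
  (Qc1_ge _ _) ha'.
by exists a2 => x /=; rewrite exprS -mulrA; exact: h2 x.
Qed.

Lemma bm_wx p x : bm (fun y => w p (x, y)).
Proof.
split; first exact: (measurableT_comp (mw p) (pair1_measurable x)).
have [C hC] := wC p; exists C => y; rewrite ger0_norm//; exact: hC.
Qed.

Lemma LR p x : linfun (fun f => Rintegral (Rk p x) setT (fun y => w p (x, y) * f y)).
Proof.
have mwx : measurable_fun setT (fun y => w p (x, y)) by case: (bm_wx p x).
have [C hC] := wC p.
have iw : (\int[Rk p x]_y (w p (x, y))%:E < +oo)%E.
  apply: (@le_lt_trans _ _ (\int[Rk p x]_y (cst C%:E) y)%E).
    apply: ge0_le_integral => //.
    - by move=> y _; rewrite lee_fin.
    - exact/measurable_EFinP.
    - by move=> y _; rewrite lee_fin.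
  by rewrite integral_cst//= prob_kernel mule1 ltry.
exact: (linfun_int (fun y => w0 p (x, y)) mwx iw).
Qed.

Lemma Rterm_le p x F : bm F ->
  Rintegral (Rk p x) setT (fun y => w p (x, y) ^+ 2 * F y ^+ 2)
    <= wplus * Q p (fun y => F y ^+ 2) x.
Proof.
move=> hF; have bF2 : bm (fun y => F y ^+ 2) by apply: bm_mul.
have [_ hs hm] := LR p x.
rewrite -densE// -hs//.
have -> : Rintegral (Rk p x) setT (fun y => w p (x, y) ^+ 2 * F y ^+ 2) =
   Rintegral (Rk p x) setT (fun y => w p (x, y) * (w p (x, y) * F y ^+ 2)).
  by apply: eq_Rintegral => y _; rewrite mulrA expr2.
apply: hm; [apply: bm_mul => //; exact: bm_wx|exact: bm_scale|].
by move=> y; apply: ler_wpM2r; [exact: sqr_ge0|exact: wp].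
Qed.

Lemma bmRterm p F : bm F ->
  bm (fun x => Rintegral (Rk p x) setT (fun y => w p (x, y) ^+ 2 * F y ^+ 2)).
Proof.
move=> hF; have [mF [CF hCF]] := hF; have [C hC] := wC p.
have k0 xy : (0 <= (w p xy ^+ 2 * F xy.2 ^+ 2)%:E)%E.
  by rewrite lee_fin mulr_ge0// sqr_ge0.
have mk : measurable_fun setT (fun xy : T * T => (w p xy ^+ 2 * F xy.2 ^+ 2)%:E).
  apply/measurable_EFinP; apply: measurable_funM.
    by apply: measurable_funM; exact: mw.
  by apply: measurable_funM; exact: measurableT_comp mF measurable_snd.
split.
  have := measurable_fun_integral_finite_kernel _ (Rk p) k0 mk.
  move=> /(measurableT_comp (fine_measurable measurableT)).
  by [].
exists (C ^+ 2 * CF ^+ 2) => x.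
rewrite ger0_norm; last by apply: Rintegral_ge0 => y _; rewrite mulr_ge0// sqr_ge0.
rewrite /Rintegral; apply: fine_le_C.
  by apply: integral_ge0 => y _; rewrite lee_fin mulr_ge0// sqr_ge0.
apply: (@le_trans _ _ (\int[Rk p x]_y (cst (C ^+ 2 * CF ^+ 2)%:E) y)%E).
  apply: ge0_le_integral => //.
  - apply/measurable_EFinP; apply: measurable_funM.
      by apply: measurable_funM; case: (bm_wx p x).
    exact: measurable_funM.
  - move=> y _; rewrite lee_fin /=; apply: ler_pM; rewrite ?sqr_ge0//.
    + by rewrite ler_sqr// ?nnegrE// (le_trans (w0 p (x, y)) (hC _)).
    + rewrite -real_normK ?num_real// ler_sqr ?nnegrE//.
      exact: le_trans (normr_ge0 _) (hCF y).
by rewrite integral_cst//= prob_kernel mule1.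
Qed.

Lemma E_mono p f h : bm f -> bm h -> (forall x, f x <= h x) -> E p f <= E p h.
Proof. by move=> bf bh fh; have [_ _ hm] := LE p; exact: hm. Qed.

Lemma wplus_ge0 : 0 <= wplus.
Proof. by have [x0 _] := inh; exact: le_trans (w0 0 (x0, x0)) (wp 0 (x0, x0)). Qed.

Lemma rho_ge0 : 0 <= rho.
Proof.
have sp0 : 0 < sigp by exact: lt_trans sm0 smp.
by rewrite /rho subr_ge0 ler_pdivrMr// mul1r ltW.
Qed.

Lemma rho_lt1 : rho < 1.
Proof.
have sp0 : 0 < sigp by exact: lt_trans sm0 smp.
by rewrite /rho ltrBlDl -ltrBlDr subrr divr_gt0.
Qed.

Lemma u_le l k y :
  Qcomp M g l k (fun=> 1) y <= sigp / sigm * E l (Qcomp M g l k (fun=> 1)).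
Proof.
have b1 : bm (fun=> (1:R)) by exact: bm_cst.
have sp0 : 0 < sigp by exact: lt_trans sm0 smp.
case: k => [|k] /=.
  by rewrite E1 mulr1 ler_pdivlMr// mul1r ltW.
set u' := Qcomp M g l.+1 k (fun=> 1).
have bu' : bm u' by exact: bmQc.
have u'0 z : 0 <= u' z by exact: ltW (Qc1_gt0 _ _ _).
have [_ h1] := mixQ l y bu' u'0.
apply: le_trans h1 _.
have h2 : sigm * Phi l u' <= E l (Q l u').
  rewrite -(Ecst l (sigm * Phi l u')); apply: E_mono; [exact: bm_cst|exact: bmQ|].
  by move=> z; have [] := mixQ l z bu' u'0.
apply: le_trans (ler_wpM2l _ h2); last by rewrite divr_ge0// ltW.
by rewrite mulrA divfK// gt_eqF.
Qed.

Lemma term_bound l k h a W : bm h -> (forall y, a <= h y /\ h y <= a + W) ->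
  E l (fun x => Rintegral (Rk l x) setT (fun y => w l (x, y) ^+ 2 *
        (Qcomp M g l.+1 k (fun z => h z - E (l.+1 + k)%N h) y) ^+ 2))
    / (E l (Qcomp M g l k.+1 (fun=> 1))) ^+ 2
  <= wplus * (rho ^+ k * W) ^+ 2 / ((1 - rho) ^+ 2 * cminus).
Proof.
move=> hh hha.
have sp0 : 0 < sigp by exact: lt_trans sm0 smp.
have W0 : 0 <= W.
  by have [x0 _] := inh; have [h1 h2] := hha x0; rewrite -(lerD2l a) addr0 (le_trans h1 h2).
set c := E (l.+1 + k)%N h.
set u := Qcomp M g l.+1 k (fun=> 1).
set v := Qcomp M g l.+1 k h.
set F := Qcomp M g l.+1 k (fun z => h z - c).
have b1 : bm (fun=> (1:R)) by exact: bm_cst.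
have bu : bm u by exact: bmQc.
have bv : bm v by exact: bmQc.
have bF : bm F by apply: bmQc; apply: bm_sub => //; exact: bm_cst.
have u0 y : 0 <= u y by exact: ltW (Qc1_gt0 _ _ _).
have FE y : F y = v y - c * u y.
  rewrite /F (_ : (fun z => h z - c) = fun z => h z - c * 1); last first.
    by apply/funext=> z; rewrite mulr1.
  have [_ hs _] := LQc l.+1 k y.
  by rewrite (linfun_sub (LQc l.+1 k y))//; [rewrite hs|exact: bm_scale].
have [a' ha'] := dob k l.+1 hh hha.
set Eu := E l.+1 u.
have Eu_pos : 0 < Eu.
  apply: (@lt_le_trans _ _ (cminus ^+ k)); first exact: exprn_gt0.
  rewrite -(Ecst l.+1 (cminus ^+ k)); apply: E_mono => //; first exact: bm_cst.
  by move=> y; exact: Qc1_ge.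
have fc : E l.+1 v = c * Eu by rewrite /v flowC.
have [_ hs1 _] := LE l.+1.
have hc1 : a' <= c.
  rewrite -(ler_pM2r Eu_pos) -fc -hs1//.
  by apply: E_mono => //; [exact: bm_scale|move=> y; case: (ha' y)].
have hc2 : c <= a' + rho ^+ k * W.
  rewrite -(ler_pM2r Eu_pos) -fc -hs1//.
  by apply: E_mono => //; [exact: bm_scale|move=> y; case: (ha' y)].
have hF y : `|F y| <= rho ^+ k * W * u y.
  have [h1 h2] := ha' y; rewrite FE ler_norml.
  have h3 : a' * u y <= c * u y by apply: ler_wpM2r.
  have h4 : c * u y <= (a' + rho ^+ k * W) * u y by apply: ler_wpM2r.
  move: h1 h2 h3 h4; rewrite !mulrDl => h1 h2 h3 h4.
  apply/andP; split.
    rewrite lerNl opprB lerBlDr; apply: le_trans h4 _.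
    by rewrite addrC lerD2l.
  rewrite lerBlDr; apply: le_trans h2 _.
  by rewrite addrC lerD2l.
have rW0 : 0 <= rho ^+ k * W by rewrite mulr_ge0// exprn_ge0// rho_ge0.
set B := rho ^+ k * W * (sigp / sigm * Eu).
have hF2 y : F y ^+ 2 <= B ^+ 2.
  rewrite -real_normK ?num_real// ler_sqr ?nnegrE//; last first.
    by rewrite /B mulr_ge0// mulr_ge0// ?divr_ge0 ?ltW.
  apply: le_trans (hF y) _; apply: ler_wpM2l => //.
  exact: u_le.
set Z := E l (Q l (fun=> 1)).
have Z_pos : 0 < Z by exact: lt_le_trans cm0 (EQ1_ge l).
have bF2 : bm (fun y => F y ^+ 2) by exact: bm_mul.
have hN : E l (fun x => Rintegral (Rk l x) setT (fun y => w l (x, y) ^+ 2 * F y ^+ 2))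
    <= wplus * B ^+ 2 * Z.
  apply: (@le_trans _ _ (E l (fun x => wplus * Q l (fun y => F y ^+ 2) x))).
    apply: E_mono; [exact: bmRterm|apply: bm_scale; exact: bmQ|].
    by move=> x; exact: Rterm_le.
  have [_ hs0 _] := LE l.
  rewrite hs0; last exact: bmQ.
  rewrite -flowE// -mulrA; apply: ler_wpM2l; first exact: wplus_ge0.
  apply: ler_wpM2r; first exact: ltW.
  by rewrite -(Ecst l.+1 (B ^+ 2)); apply: E_mono => //; exact: bm_cst.
have hD : E l (Qcomp M g l k.+1 (fun=> 1)) = Eu * Z.
  by rewrite /= -flowE.
rewrite hD.
apply: (@le_trans _ _ (wplus * B ^+ 2 * Z / (Eu * Z) ^+ 2)).
  by apply: ler_wpM2r => //; rewrite invr_ge0 sqr_ge0.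
have -> : wplus * B ^+ 2 * Z / (Eu * Z) ^+ 2 =
   (wplus * (rho ^+ k * W) ^+ 2 / ((1 - rho) ^+ 2)) / Z.
  rewrite /B /rho; field.
  by rewrite opprB addrCA subrr addr0 !gt_eqF.
have r1 : 1 - rho != 0 by rewrite subr_eq0 eq_sym lt_eqF// rho_lt1.
rewrite (_ : wplus * (rho ^+ k * W) ^+ 2 / ((1 - rho) ^+ 2 * cminus) =
   wplus * (rho ^+ k * W) ^+ 2 / (1 - rho) ^+ 2 / cminus); last first.
  by field; rewrite r1 gt_eqF.
apply: ler_wpM2l.
  by rewrite divr_ge0 ?sqr_ge0// mulr_ge0 ?sqr_ge0// wplus_ge0.
by rewrite lef_pV2 ?posrE//; exact: EQ1_ge.
Qed.

Lemma main_sec n h : (1 <= n)%N -> bm h ->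
  sigma2 M g Rk w eta n h <=
    wplus * osc h ^+ 2 / ((1 - rho) ^+ 2 * (1 - rho ^+ 2) ^+ 2 * cminus).
Proof.
move=> n1 hh; have [mh [C hC]] := hh.
have hub : has_ubound (range (fun xy : T * T => `|h xy.1 - h xy.2|)).
  exists (C + C) => _ [[y y'] _ <-] /=.
  by rewrite (le_trans (ler_normB _ _))// lerD.
have hosc y y' : `|h y - h y'| <= osc h.
  by apply: sup_ubound => //; exists (y, y').
set W := osc h.
have hlb : has_lbound (range h).
  by exists (- C) => _ [y _ <-]; have := hC y; rewrite ler_norml => /andP[].
set a := inf (range h).
have hha y : a <= h y /\ h y <= a + W.
  split; first by apply: inf_lbound => //; exists y.
  rewrite -lerBlDr; apply: lb_le_inf; first by exists (h y), y.
  move=> _ [y' _ <-]; rewrite lerBlDr.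
  have := hosc y y'; rewrite ler_norml => /andP[_ h2].
  by rewrite -lerBlDl.
rewrite /sigma2.
set K' := wplus * W ^+ 2 / ((1 - rho) ^+ 2 * cminus).
set q := rho ^+ 2.
apply: (@le_trans _ _ (\sum_(0 <= l < n) (n - l)%:R * (q ^+ (n - l.+1) * K'))).
  apply: ler_sum_nat => l /andP[_ ln].
  set k := (n - l.+1)%N.
  have nk : n = (l.+1 + k)%N by rewrite /k; lia.
  have nl : (n - l)%N = k.+1 by rewrite /k; lia.
  rewrite nl; apply: ler_wpM2l; first exact: ler0n.
  rewrite [X in mint (eta X) h]nk.
  apply: le_trans (term_bound l k hh hha) _.
  rewrite le_eqVlt; apply/orP; left; apply/eqP.
  by rewrite /K' /q exprMn exprAC; ring.
under eq_bigr do rewrite mulrA.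
rewrite -mulr_suml.
rewrite big_nat_rev /=.
rewrite (eq_big_nat _ _ (F2 := fun j => (j.+1)%:R * q ^+ j)); last first.
  move=> i /andP[_ iN].
  have -> : (n - (0 + n - i.+1))%N = i.+1 by lia.
  by have -> : (n - (0 + n - i.+1).+1)%N = i by lia.
have q0 : 0 <= q by exact: sqr_ge0.
have q1 : q < 1.
  by rewrite /q expr2 (le_lt_trans (ler_piMr _ _))// ?rho_ge0 ?ltW ?rho_lt1.
apply: (@le_trans _ _ (1 / (1 - q) ^+ 2 * K')).
  apply: ler_wpM2r; last exact: geom_sum.
  apply: divr_ge0; [apply: mulr_ge0; [exact: wplus_ge0|exact: sqr_ge0]|apply: mulr_ge0; [exact: sqr_ge0|exact: ltW]].
rewrite le_eqVlt; apply/orP; left; apply/eqP.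
have r1 : 1 - rho != 0 by rewrite subr_eq0 eq_sym lt_eqF// rho_lt1.
have q1' : 1 - q != 0 by rewrite subr_eq0 eq_sym lt_eqF.
rewrite /K' /q; clearbody W; clear hha hosc; field.
by rewrite r1 gt_eqF// andbT; rewrite /q in q1'.
Qed.

End Main.

Unset Implicit Arguments.

Theorem mainTheorem14 (d : measure_display) (T : measurableType d) (R : realType)
  (M : nat -> R.-pker T ~> T) (g : nat -> T -> R)
  (Rk : nat -> R.-pker T ~> T) (w : nat -> T * T -> R)
  (eta : nat -> probability T R)
  (phi : probability T R) (sigm sigp wplus cminus : R) :
  (* potentials g_p : nonnegative measurable *)
  (forall p, measurable_fun setT (g p)) ->
  (forall p x, 0 <= g p x) ->
  (* Q_p 1 bounded *)
  (forall p, exists C : R, forall x,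
      (\int[M p x]_y (g p.+1 y)%:E <= C%:E)%E) ->
  (* w_p nonnegative bounded measurable density dQ_p(x,.)/dR_p(x,.) *)
  (forall p, measurable_fun setT (w p)) ->
  (forall p xy, 0 <= w p xy) ->
  (forall p, exists C : R, forall xy, w p xy <= C) ->
  (forall p x A, measurable A ->
      (\int[M p x]_(y in A) (g p.+1 y)%:E = \int[Rk p x]_(y in A) (w p (x, y))%:E)%E) ->
  (* Feynman-Kac flow eta_{p+1} = eta_p Q_p / eta_p Q_p 1 *)
  (forall p A, measurable A ->
      eta p.+1 A = (mint (eta p) (Qop M g p (\1_A)) / mint (eta p) (Qop M g p (fun=> 1)))%:E) ->
  (* (MG)(i) *)
  0 < sigm -> sigm < sigp ->
  (forall p x A, measurable A ->
      ((sigm%:E * phi A <= M p x A) /\ (M p x A <= sigp%:E * phi A))%E) ->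
  (* (MG)(ii) *)
  (forall p xy, w p xy <= wplus) ->
  (* (MG)(iii) *)
  0 < cminus ->
  (forall p x, cminus <= Qop M g p (fun=> 1) x) ->
  forall (n : nat) (h : T -> R), (1 <= n)%N -> bounded_measurable h ->
  let rho := 1 - sigm / sigp in
  sigma2 M g Rk w eta n h <=
    wplus * osc h ^+ 2 / ((1 - rho) ^+ 2 * (1 - rho ^+ 2) ^+ 2 * cminus).
Proof.
move=> mg g0 gC mw w0 wC dens flow sm0 smp mix wp cm0 cm n h n1 hh.
cbv zeta.
exact: (main_sec mg g0 gC mw w0 wC dens flow sm0 smp mix wp cm0 cm n1 hh).
Qed.
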